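(* Let $u^2_{2n}$ denote the coefficient of $a^4$ in the Taylor expansion $u_{2n}(a)=u^0_{2n}+u^1_{2n}a^2+u^2_{2n}a^4+O(a^6)$ at $a=0$. Then $$u^2_2=1,\quad u^2_4=\frac{63}{64},\quad u^2_6=\frac{2917}{2592},\quad u^2_8=\frac{335485}{331776},\quad u^2_{10}=\frac{382273}{460800},$$ and for $n=6,7,\dots$, $$u^2_{2n}=\frac{61^2}{12^4}\,\frac{(n+1)^2}{2^{n+1}}\Bigl(n+\frac{2^2\,29^2\,89}{5^2\,61^2}\Bigr).$$
   Context: The rational functions $u_{2n}(a)$ (which depend on $a$ only through $a^2$) are defined by $(a^2+1)u_2=1$ and, for $n\ge2$, $(a^2+n^2)u_{2n}=3u_{2(n-1)}+3\sum_{j_1+j_2=n-1}u_{2j_1}u_{2j_2}+\sum_{j_1+j_2+j_3=n-1}u_{2j_1}u_{2j_2}u_{2j_3}-\sum_{1\le j_1,\,2j_1<n}(n-2j_1)^2u_{2j_1}u_{2(n-j_1)}$, all indices $j_i\ge1$. *)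

(* Defs.v *)
From mathcomp Require Import all_boot all_order all_algebra.
From mathcomp Require Import reals.
Set Implicit Arguments. Unset Strict Implicit. Unset Printing Implicit Defensive.
Import Order.TTheory GRing.Theory Num.Theory.
Local Open Scope ring_scope.

Section U.
Variable R : realType.

(* Given s = [:: u_0; u_2; ...; u_{2(n-1)}] (u_0 is a dummy 0, never used,
   all indices j_i >= 1), compute u_{2n}(a) from the defining recursion. *)
Definition ustep (a : R) (s : seq R) (n : nat) : R :=
  let u j := nth 0 s j in
  if n == 1%N then 1 / (a ^+ 2 + 1)
  else
   (3 * u n.-1
    + 3 * (\sum_(1 <= j1 < n.-1) u j1 * u (n.-1 - j1)%N)
    + (\sum_(1 <= j1 < n.-1) \sum_(1 <= j2 < n.-1 - j1)
          u j1 * u j2 * u (n.-1 - j1 - j2)%N)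
    - (\sum_(1 <= j1 < n | (2 * j1 < n)%N)
          ((n - 2 * j1) ^ 2)%:R * u j1 * u (n - j1)%N))
   / (a ^+ 2 + (n ^ 2)%:R).

Fixpoint useq (a : R) (n : nat) : seq R :=
  match n with
  | 0 => [:: 0]
  | m.+1 => rcons (useq a m) (ustep a (useq a m) m.+1)
  end.

(* uu a n = u_{2n}(a), for n >= 1 *)
Definition uu (a : R) (n : nat) : R := nth 0 (useq a n) n.

Definition a4_coef (f : R -> R) (c : R) : Prop :=
  exists c0 c1 C d : R, 0 < d /\
    forall a : R, `|a| < d ->
      `|f a - (c0 + c1 * a ^+ 2 + c * a ^+ 4)| <= C * `|a| ^+ 6.

End U.

(* Main.v *)
Require Import Defs.
From mathcomp Require Import all_boot all_order all_algebra.
From mathcomp Require Import reals.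
From mathcomp Require Import ring lra zify.
Import Order.TTheory GRing.Theory Num.Theory.
Local Open Scope ring_scope.
Set Implicit Arguments. Unset Strict Implicit. Unset Printing Implicit Defensive.

Section S.
Variable R : realType.


Definition bnd (h : R -> R) := exists M d : R, 0 < d /\ forall a, `|a| < d -> `|h a| <= M.
Definition O6 (e : R -> R) := exists C d : R, 0 < d /\ forall a, `|a| < d -> `|e a| <= C * `|a| ^+ 6.

Lemma O6_ext e e' : (forall a, e a = e' a) -> O6 e -> O6 e'.
Proof. by move=> H [C [d [d0 Hd]]]; exists C, d; split=> // a Ha; rewrite -H; exact: Hd. Qed.

Lemma bnd_ext e e' : (forall a, e a = e' a) -> bnd e -> bnd e'.
Proof. by move=> H [C [d [d0 Hd]]]; exists C, d; split=> // a Ha; rewrite -H; exact: Hd. Qed.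

Lemma O6_add e1 e2 : O6 e1 -> O6 e2 -> O6 (fun a => e1 a + e2 a).
Proof.
move=> [C1 [d1 [d10 H1]]] [C2 [d2 [d20 H2]]].
exists (C1 + C2), (Num.min d1 d2); split; first by rewrite lt_min d10.
move=> a; rewrite lt_min => /andP[a1 a2].
rewrite mulrDl; apply: le_trans (ler_normD _ _) _; apply: lerD; [exact: H1|exact: H2].
Qed.

Lemma O6_mulb e h : O6 e -> bnd h -> O6 (fun a => e a * h a).
Proof.
move=> [C [d1 [d10 H1]]] [M [d2 [d20 H2]]].
exists (C * M), (Num.min d1 d2); split; first by rewrite lt_min d10.
move=> a; rewrite lt_min => /andP[a1 a2].
have -> : C * M * `|a| ^+ 6 = (C * `|a| ^+ 6) * M by ring.
rewrite normrM; apply: ler_pM => //; [exact: H1| exact: H2].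
Qed.

Lemma O6_a6 h : bnd h -> O6 (fun a => a ^+ 6 * h a).
Proof.
move=> [M [d [d0 H]]]; exists M, d; split=> // a Ha.
rewrite normrM normrX mulrC; apply: ler_wpM2r (H a Ha).
by rewrite exprn_ge0.
Qed.

Lemma bnd_O6 e : O6 e -> bnd e.
Proof.
move=> [C [d [d0 H]]]; exists `|C|, (Num.min d 1); split; first by rewrite lt_min d0 ltr01.
move=> a; rewrite lt_min => /andP[a1 a2].
apply: le_trans (H a a1) _; apply: le_trans (ler_wpM2r _ (ler_norm C)) _.
  exact: exprn_ge0.
rewrite -[X in _ <= X]mulr1; apply: ler_wpM2l => //.
by apply: exprn_ile1 => //; apply: ltW.
Qed.

Lemma bnd_cst c : bnd (fun _ => c).
Proof. by exists `|c|, 1; split. Qed.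

Lemma bnd_id : bnd (fun a => a).
Proof. by exists 1, 1; split=> // a /ltW. Qed.

Lemma bnd_add h1 h2 : bnd h1 -> bnd h2 -> bnd (fun a => h1 a + h2 a).
Proof.
move=> [C1 [d1 [d10 H1]]] [C2 [d2 [d20 H2]]].
exists (C1 + C2), (Num.min d1 d2); split; first by rewrite lt_min d10.
move=> a; rewrite lt_min => /andP[a1 a2].
apply: le_trans (ler_normD _ _) _; apply: lerD; [exact: H1|exact: H2].
Qed.

Lemma bnd_mul h1 h2 : bnd h1 -> bnd h2 -> bnd (fun a => h1 a * h2 a).
Proof.
move=> [C1 [d1 [d10 H1]]] [C2 [d2 [d20 H2]]].
exists (C1 * C2), (Num.min d1 d2); split; first by rewrite lt_min d10.
move=> a; rewrite lt_min => /andP[a1 a2].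
rewrite normrM; apply: ler_pM => //; [exact: H1|exact: H2].
Qed.

Lemma bnd_X n : bnd (fun a => a ^+ n).
Proof.
elim: n => [|n IH]; first exact: bnd_cst.
apply: (bnd_ext (e := fun a => a * a ^+ n)); first by move=> a; rewrite exprS.
exact: bnd_mul bnd_id IH.
Qed.

Definition pol (c0 c1 c2 a : R) := c0 + c1 * a ^+ 2 + c2 * a ^+ 4.

Lemma bnd_pol c0 c1 c2 : bnd (pol c0 c1 c2).
Proof.
apply: bnd_add; first apply: bnd_add; first exact: bnd_cst.
  by apply: bnd_mul; [exact: bnd_cst|exact: bnd_X].
by apply: bnd_mul; [exact: bnd_cst|exact: bnd_X].
Qed.

Lemma bnd_inv m : 0 < m -> bnd (fun a => (a ^+ 2 + m)^-1).
Proof.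
move=> m0; exists m^-1, 1; split=> // a _.
have h : 0 < a ^+ 2 + m by apply: ltr_wpDl => //; exact: sqr_ge0.
rewrite ger0_norm; last by rewrite invr_ge0 ltW.
rewrite lef_pV2 ?posrE //.
by rewrite lerDr sqr_ge0.
Qed.

Definition expan (f : R -> R) (c0 c1 c2 : R) := O6 (fun a => f a - pol c0 c1 c2 a).

Lemma expan_ext f g c0 c1 c2 : (forall a, f a = g a) -> expan f c0 c1 c2 -> expan g c0 c1 c2.
Proof. by move=> H; apply: O6_ext => a; rewrite H. Qed.

Lemma expan_bnd f c0 c1 c2 : expan f c0 c1 c2 -> bnd f.
Proof.
move=> H; apply: (bnd_ext (e := fun a => (f a - pol c0 c1 c2 a) + pol c0 c1 c2 a)).
  by move=> a; rewrite subrK.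
by apply: bnd_add; [exact: bnd_O6|exact: bnd_pol].
Qed.

Lemma expan_cst c : expan (fun _ => c) c 0 0.
Proof.
exists 0, 1; split=> // a _.
have -> : c - pol c 0 0 a = 0 by rewrite /pol; ring.
by rewrite normr0 mul0r.
Qed.

Lemma expan_add f g f0 f1 f2 g0 g1 g2 : expan f f0 f1 f2 -> expan g g0 g1 g2 ->
  expan (fun a => f a + g a) (f0 + g0) (f1 + g1) (f2 + g2).
Proof.
move=> Hf Hg; apply: O6_ext (O6_add Hf Hg) => a /=; rewrite /pol; ring.
Qed.

Lemma expan_scale c f f0 f1 f2 : expan f f0 f1 f2 ->
  expan (fun a => c * f a) (c * f0) (c * f1) (c * f2).
Proof.
move=> Hf; apply: O6_ext (O6_mulb Hf (bnd_cst c)) => a /=; rewrite /pol; ring.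
Qed.

Lemma expan_sub f g f0 f1 f2 g0 g1 g2 : expan f f0 f1 f2 -> expan g g0 g1 g2 ->
  expan (fun a => f a - g a) (f0 - g0) (f1 - g1) (f2 - g2).
Proof.
move=> Hf Hg; have Hg' := expan_scale (-1) Hg.
apply: O6_ext (O6_add Hf Hg') => a /=; rewrite /pol; ring.
Qed.

Lemma expan_mul f g f0 f1 f2 g0 g1 g2 : expan f f0 f1 f2 -> expan g g0 g1 g2 ->
  expan (fun a => f a * g a) (f0 * g0) (f0 * g1 + f1 * g0) (f0 * g2 + f1 * g1 + f2 * g0).
Proof.
move=> Hf Hg.
have H1 := O6_mulb Hf (expan_bnd Hg).
have H2 := O6_mulb Hg (bnd_pol f0 f1 f2).
have H3 := O6_a6 (bnd_pol (f1 * g2 + f2 * g1) (f2 * g2) 0).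
apply: O6_ext (O6_add (O6_add H1 H2) H3) => a /=; rewrite /pol; ring.
Qed.

Lemma expan_div N n0 n1 n2 m c0 c1 c2 : expan N n0 n1 n2 -> 0 < m ->
  m * c0 = n0 -> m * c1 + c0 = n1 -> m * c2 + c1 = n2 ->
  expan (fun a => N a / (a ^+ 2 + m)) c0 c1 c2.
Proof.
move=> HN m0 E0 E1 E2.
have H1 := O6_mulb HN (bnd_inv m0).
have H2 := O6_a6 (bnd_mul (bnd_cst (- c2)) (bnd_inv m0)).
apply: O6_ext (O6_add H1 H2) => a /=.
have h : a ^+ 2 + m != 0 by rewrite gt_eqF // ltr_wpDl // sqr_ge0.
rewrite /pol -E0 -E1 -E2; by field.
Qed.

Lemma expan_sum (s : seq nat) (P : pred nat) (F : nat -> R -> R) (c0 c1 c2 : nat -> R) :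
  (forall j, j \in s -> P j -> expan (F j) (c0 j) (c1 j) (c2 j)) ->
  expan (fun a => \sum_(j <- s | P j) F j a)
    (\sum_(j <- s | P j) c0 j) (\sum_(j <- s | P j) c1 j) (\sum_(j <- s | P j) c2 j).
Proof.
elim: s => [|x s IH] H.
  rewrite !big_nil; apply: (expan_ext (f := fun _ => 0)); first by move=> a; rewrite big_nil.
  exact: expan_cst.
have IH' : expan (fun a => \sum_(j <- s | P j) F j a)
    (\sum_(j <- s | P j) c0 j) (\sum_(j <- s | P j) c1 j) (\sum_(j <- s | P j) c2 j).
  by apply: IH => j js Pj; apply: H => //; rewrite inE js orbT.
rewrite !big_cons.
case Px: (P x).
  apply: (expan_ext (f := fun a => F x a + \sum_(j <- s | P j) F j a)).
    by move=> a; rewrite big_cons Px.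
  by apply: expan_add => //; apply: H => //; rewrite inE eqxx.
apply: (expan_ext (f := fun a => \sum_(j <- s | P j) F j a)) => //.
by move=> a; rewrite big_cons Px.
Qed.



Implicit Types (A B : nat -> R).


Definition conv A B k := \sum_(1 <= j < k) A j * B (k - j)%N.
Definition wconv A B k :=
  \sum_(1 <= j < k) (k%:R - 2 * j%:R) ^+ 2 * (A j * B (k - j)%N).

Lemma sum_rev (F : nat -> R) k :
  \sum_(1 <= j < k) F j = \sum_(1 <= j < k) F (k - j)%N.
Proof. by rewrite big_nat_rev; apply: eq_bigr => j _; rewrite add1n subSS. Qed.

Lemma conv_comm A B k : conv A B k = conv B A k.
Proof.
rewrite /conv sum_rev; apply: eq_big_nat => j /andP[_ ljk].
by rewrite subKn ?(ltnW ljk) // mulrC.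
Qed.

Lemma wconv_comm A B k : wconv A B k = wconv B A k.
Proof.
rewrite /wconv sum_rev; apply: eq_big_nat => j /andP[_ ljk].
rewrite subKn ?(ltnW ljk) // natrB ?(ltnW ljk) //; congr (_ * _); last exact: mulrC.
ring.
Qed.

Lemma conv_ext A A' B B' k : (forall j, A j = A' j) -> (forall j, B j = B' j) ->
  conv A B k = conv A' B' k.
Proof. by move=> HA HB; apply: eq_bigr => j _; rewrite HA HB. Qed.

Lemma wconv_ext A A' B B' k : (forall j, A j = A' j) -> (forall j, B j = B' j) ->
  wconv A B k = wconv A' B' k.
Proof. by move=> HA HB; apply: eq_bigr => j _; rewrite HA HB. Qed.

Lemma sum_split_tail (E : nat -> R) K k : (0 < K)%N -> (K <= k)%N ->
  (forall j, (K <= j)%N -> E j = 0) ->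
  \sum_(1 <= i < k) E i = \sum_(1 <= i < K) E i.
Proof.
move=> K0 Kk HE; rewrite (big_cat_nat (n:=K)) //=.
rewrite -[RHS]addr0; congr (_ + _); rewrite big_nat_cond; apply: big1.
by move=> i /andP[/andP[Ki _] _]; exact: HE.
Qed.

Lemma conv_split A B (q : R -> R) (E : nat -> R) K k :
  (0 < K)%N ->
  (forall j, (1 <= j)%N -> B j = q j%:R + E j) ->
  (forall j, (K <= j)%N -> E j = 0) -> (K <= k)%N ->
  conv A B k = \sum_(1 <= j < k) A j * q (k%:R - j%:R)
             + \sum_(1 <= i < K) E i * A (k - i)%N.
Proof.
move=> K0 HB HE Kk; rewrite /conv.
have -> : \sum_(1 <= j < k) A j * B (k - j)%N =
   \sum_(1 <= j < k) A j * q (k%:R - j%:R) + \sum_(1 <= j < k) A j * E (k - j)%N.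
  rewrite -big_split; apply: eq_big_nat => j /andP[j1 jk].
  by rewrite HB ?subn_gt0 // natrB ?(ltnW jk) // mulrDr.
congr (_ + _); rewrite sum_rev.
rewrite (@sum_split_tail (fun i => A (k - i)%N * E (k - (k - i))%N) K) //.
  apply: eq_big_nat => i /andP[_ iK]; rewrite subKn; first exact: mulrC.
  by apply: leq_trans (ltnW iK) Kk.
move=> j Kj /=; case: (leqP j k) => jk.
  by rewrite subKn // HE // mulr0.
by move/ltnW: jk; rewrite -subn_eq0 => /eqP ->; rewrite subn0 HE ?mulr0 // (leq_trans Kk).
Qed.

Lemma wconv_split A B (q : R -> R) (E : nat -> R) K k :
  (0 < K)%N ->
  (forall j, (1 <= j)%N -> B j = q j%:R + E j) ->
  (forall j, (K <= j)%N -> E j = 0) -> (K <= k)%N ->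
  wconv A B k = \sum_(1 <= j < k) (k%:R - 2 * j%:R) ^+ 2 * (A j * q (k%:R - j%:R))
             + \sum_(1 <= i < K) (k%:R - 2 * (k - i)%N%:R) ^+ 2 * (A (k - i)%N * E i).
Proof.
move=> K0 HB HE Kk; rewrite /wconv.
have -> : \sum_(1 <= j < k) (k%:R - 2 * j%:R) ^+ 2 * (A j * B (k - j)%N) =
   \sum_(1 <= j < k) (k%:R - 2 * j%:R) ^+ 2 * (A j * q (k%:R - j%:R))
   + \sum_(1 <= j < k) (k%:R - 2 * j%:R) ^+ 2 * (A j * E (k - j)%N).
  rewrite -big_split; apply: eq_big_nat => j /andP[j1 jk].
  by rewrite HB ?subn_gt0 // natrB ?(ltnW jk) // !mulrDr.
congr (_ + _); rewrite sum_rev.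
rewrite (@sum_split_tail (fun i => (k%:R - 2 * (k - i)%N%:R) ^+ 2 * (A (k - i)%N * E (k - (k - i))%N)) K) //.
  apply: eq_big_nat => i /andP[_ iK]; rewrite subKn //.
  by apply: leq_trans (ltnW iK) Kk.
move=> j Kj /=; case: (leqP j k) => jk.
  by rewrite subKn // HE // !mulr0.
by move/ltnW: jk; rewrite -subn_eq0 => /eqP ->; rewrite subn0 HE ?mulr0 // (leq_trans Kk).
Qed.

Lemma sum_anti (f G : nat -> R) K : (0 < K)%N ->
  (forall m, (K <= m)%N -> G m.+1 = G m + f m) ->
  \sum_(1 <= j < K) f j = G K ->
  forall m, (K <= m)%N -> \sum_(1 <= j < m) f j = G m.
Proof.
move=> K0 HG HK; elim=> [|m IH]; first by rewrite leqn0 => /eqP K0'; move: K0; rewrite K0'.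
rewrite leq_eqVlt => /orP[/eqP <- // | ltKm].
rewrite big_nat_recr /=; last by apply: leq_trans K0 ltKm.
by rewrite IH // HG.
Qed.


Definition q0 (x : R) : R := (1 + 1 * x).
Definition E0 (j : nat) : R := 0.
Definition V0 (j : nat) : R := q0 j%:R + E0 j.
Lemma E0_zero j : (1 <= j)%N -> E0 j = 0.
Proof. by case: j => [|j] //= H; exfalso; lia. Qed.
Lemma V0_dec j : (1 <= j)%N -> V0 j = q0 j%:R + E0 j.
Proof. by []. Qed.
Lemma V0_big j : (1 <= j)%N -> V0 j = q0 j%:R.
Proof. by move=> H; rewrite /V0 E0_zero // addr0. Qed.
Definition q1 (x : R) : R := ((- 61 - 122 * x - 61 * x ^+ 2) / 144).
Definition E1 (j : nat) : R := match j with | 1 => (- (11 / 36)) | 2 => ((1 / 16)) | _ => 0 end.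
Definition V1 (j : nat) : R := q1 j%:R + E1 j.
Lemma E1_zero j : (3 <= j)%N -> E1 j = 0.
Proof. by case: j => [|[|[|j]]] //= H; exfalso; lia. Qed.
Lemma V1_dec j : (1 <= j)%N -> V1 j = q1 j%:R + E1 j.
Proof. by []. Qed.
Lemma V1_big j : (3 <= j)%N -> V1 j = q1 j%:R.
Proof. by move=> H; rewrite /V1 E1_zero // addr0. Qed.
Definition q2 (x : R) : R := (((299 * 1000 + 396) + (691 * 1000 + 817) * x + (485 * 1000 + 446) * x ^+ 2 + (93 * 1000 + 25) * x ^+ 3) / ((1 * 1000 + 36) * 1000 + 800)).
Definition E2 (j : nat) : R := match j with | 1 => (((41 * 1000 + 993) / (86 * 1000 + 400))) | 2 => (- ((15 * 1000 + 923) / (57 * 1000 + 600))) | 3 => (((1 * 1000 + 643) / (21 * 1000 + 600))) | 4 => (- (263 / (20 * 1000 + 736))) | 5 => ((1 / (1 * 1000 + 152))) | _ => 0 end.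
Definition V2 (j : nat) : R := q2 j%:R + E2 j.
Lemma E2_zero j : (6 <= j)%N -> E2 j = 0.
Proof. by case: j => [|[|[|[|[|[|j]]]]]] //= H; exfalso; lia. Qed.
Lemma V2_dec j : (1 <= j)%N -> V2 j = q2 j%:R + E2 j.
Proof. by []. Qed.
Lemma V2_big j : (6 <= j)%N -> V2 j = q2 j%:R.
Proof. by move=> H; rewrite /V2 E2_zero // addr0. Qed.
Definition G00 (m x : R) : R := ((- 6 - 6 * x + 5 * m + 3 * m * x + 3 * m ^+ 2 + 3 * m ^+ 2 * x - 2 * m ^+ 3) / 6).
Definition r00 (x : R) : R := ((- 6 - 1 * x + 6 * x ^+ 2 + 1 * x ^+ 3) / 6).
Lemma cf_00 k : (1 <= k)%N -> conv V0 V0 k = r00 k%:R.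
Proof.
move=> Hk.
have Kk : (1 <= k)%N by lia.
rewrite (@conv_split V0 V0 q0 E0 1 k isT V0_dec E0_zero Kk).
have HS : \sum_(1 <= j < k) (fun j => V0 j * q0 (k%:R - j%:R)) j = G00 k%:R k%:R.
  have KAk : (1 <= k)%N by lia.
  apply: (@sum_anti (fun j => V0 j * q0 (k%:R - j%:R)) (fun m => G00 m%:R k%:R) 1 isT _ _ k KAk).
  - move=> m Hm; rewrite /= (V0_big Hm) ; unfold V0, V1, V2; unfold E0, E1, E2, G00, V0, V1, V2, q0, q1, q2, r00; rewrite /=; by field.
  - rewrite unlock /= ; unfold V0, V1, V2; unfold E0, E1, E2, G00, V0, V1, V2, q0, q1, q2, r00; rewrite /=; by field.
rewrite HS; clear HS Kk; move: Hk; case: k => [|k] //= _.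
rewrite unlock /= ?subSS ?subn0 ; unfold V0, V1, V2; unfold E0, E1, E2, G00, V0, V1, V2, q0, q1, q2, r00; rewrite /=; by field.
Qed.
Definition E00 (j : nat) : R := 0.
Lemma E00_zero j : (1 <= j)%N -> E00 j = 0.
Proof. by case: j => [|j] //= H; exfalso; lia. Qed.
Lemma dec_00 j : (1 <= j)%N -> (conv V0 V0) j = r00 j%:R + E00 j.
Proof.
move=> Hj; case: (leqP 1 j) => HT; first by rewrite cf_00 // E00_zero // addr0.
move: Hj HT; case: j => [|j] //= _ _.
all: rewrite /conv unlock /= ?subSS ?subn0 ; unfold V0, V1, V2; unfold E0, E00, E1, E2, V0, V1, V2, q0, q1, q2, r00; rewrite /=; by field.
Qed.
Definition G01 (m x : R) : R := ((732 + (1 * 1000 + 464) * x + 732 * x ^+ 2 - 976 * m - (1 * 1000 + 220) * m * x - 366 * m * x ^+ 2 - 183 * m ^+ 2 - 732 * m ^+ 2 * x - 366 * m ^+ 2 * x ^+ 2 + 610 * m ^+ 3 + 488 * m ^+ 3 * x - 183 * m ^+ 4) / (1 * 1000 + 728)).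
Definition r01 (x : R) : R := ((624 + 68 * x - 671 * x ^+ 2 - 488 * x ^+ 3 - 61 * x ^+ 4) / (1 * 1000 + 728)).
Lemma cf_01 k : (3 <= k)%N -> conv V0 V1 k = r01 k%:R.
Proof.
move=> Hk.
have Kk : (3 <= k)%N by lia.
rewrite (@conv_split V0 V1 q1 E1 3 k isT V1_dec E1_zero Kk).
have HS : \sum_(1 <= j < k) (fun j => V0 j * q1 (k%:R - j%:R)) j = G01 k%:R k%:R.
  have KAk : (1 <= k)%N by lia.
  apply: (@sum_anti (fun j => V0 j * q1 (k%:R - j%:R)) (fun m => G01 m%:R k%:R) 1 isT _ _ k KAk).
  - move=> m Hm; rewrite /= (V0_big Hm) ; unfold V0, V1, V2; unfold E0, E1, E2, G01, V0, V1, V2, q0, q1, q2, r01; rewrite /=; by field.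
  - rewrite unlock /= ; unfold V0, V1, V2; unfold E0, E1, E2, G01, V0, V1, V2, q0, q1, q2, r01; rewrite /=; by field.
rewrite HS; clear HS Kk; move: Hk; case: k => [|[|[|k]]] //= _.
rewrite unlock /= ?subSS ?subn0 ; unfold V0, V1, V2; unfold E0, E1, E2, G01, V0, V1, V2, q0, q1, q2, r01; rewrite /=; by field.
Qed.
Definition E01 (j : nat) : R := match j with | 1 => ((11 / 36)) | 2 => (- (1 / 16)) | _ => 0 end.
Lemma E01_zero j : (3 <= j)%N -> E01 j = 0.
Proof. by case: j => [|[|[|j]]] //= H; exfalso; lia. Qed.
Lemma dec_01 j : (1 <= j)%N -> (conv V0 V1) j = r01 j%:R + E01 j.
Proof.
move=> Hj; case: (leqP 3 j) => HT; first by rewrite cf_01 // E01_zero // addr0.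
move: Hj HT; case: j => [|[|[|j]]] //= _ _.
all: rewrite /conv unlock /= ?subSS ?subn0 ; unfold V0, V1, V2; unfold E0, E01, E1, E2, V0, V1, V2, q0, q1, q2, r01; rewrite /=; by field.
Qed.
Definition G02 (m x : R) : R := ((- ((3 * 1000 + 592) * 1000 + 752) - ((8 * 1000 + 301) * 1000 + 804) * x - ((5 * 1000 + 825) * 1000 + 352) * x ^+ 2 - ((1 * 1000 + 116) * 1000 + 300) * x ^+ 3 + ((5 * 1000 + 571) * 1000 + 746) * m + ((8 * 1000 + 592) * 1000 + 620) * m * x + ((4 * 1000 + 28) * 1000 + 976) * m * x ^+ 2 + (558 * 1000 + 150) * m * x ^+ 3 + (60 * 1000 + 963) * m ^+ 2 + ((3 * 1000 + 313) * 1000 + 677) * m ^+ 2 * x + ((2 * 1000 + 912) * 1000 + 676) * m ^+ 2 * x ^+ 2 + (558 * 1000 + 150) * m ^+ 2 * x ^+ 3 - ((3 * 1000 + 552) * 1000 + 110) * m ^+ 3 - ((4 * 1000 + 441) * 1000 + 718) * m ^+ 3 * x - ((1 * 1000 + 116) * 1000 + 300) * m ^+ 3 * x ^+ 2 + ((1 * 1000 + 735) * 1000 + 413) * m ^+ 4 + (837 * 1000 + 225) * m ^+ 4 * x - (223 * 1000 + 260) * m ^+ 5) / ((12 * 1000 + 441) * 1000 + 600)).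
Definition r02 (x : R) : R := ((- ((1 * 1000 + 615) * 1000 + 920) + (676 * 1000 + 934) * x + ((2 * 1000 + 828) * 1000 + 231) * x ^+ 2 + ((2 * 1000 + 674) * 1000 + 243) * x ^+ 3 + (764 * 1000 + 521) * x ^+ 4 + (55 * 1000 + 815) * x ^+ 5) / ((12 * 1000 + 441) * 1000 + 600)).
Lemma cf_02 k : (6 <= k)%N -> conv V0 V2 k = r02 k%:R.
Proof.
move=> Hk.
have Kk : (6 <= k)%N by lia.
rewrite (@conv_split V0 V2 q2 E2 6 k isT V2_dec E2_zero Kk).
have HS : \sum_(1 <= j < k) (fun j => V0 j * q2 (k%:R - j%:R)) j = G02 k%:R k%:R.
  have KAk : (1 <= k)%N by lia.
  apply: (@sum_anti (fun j => V0 j * q2 (k%:R - j%:R)) (fun m => G02 m%:R k%:R) 1 isT _ _ k KAk).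
  - move=> m Hm; rewrite /= (V0_big Hm) ; unfold V0, V1, V2; unfold E0, E1, E2, G02, V0, V1, V2, q0, q1, q2, r02; rewrite /=; by field.
  - rewrite unlock /= ; unfold V0, V1, V2; unfold E0, E1, E2, G02, V0, V1, V2, q0, q1, q2, r02; rewrite /=; by field.
rewrite HS; clear HS Kk; move: Hk; case: k => [|[|[|[|[|[|k]]]]]] //= _.
rewrite unlock /= ?subSS ?subn0 ; unfold V0, V1, V2; unfold E0, E1, E2, G02, V0, V1, V2, q0, q1, q2, r02; rewrite /=; by field.
Qed.
Definition E02 (j : nat) : R := match j with | 1 => (- ((112 * 1000 + 163) / (259 * 1000 + 200))) | 2 => (((4 * 1000 + 301) / (16 * 1000 + 200))) | 3 => (- ((6 * 1000 + 497) / (86 * 1000 + 400))) | 4 => ((263 / (20 * 1000 + 736))) | 5 => (- (1 / (1 * 1000 + 152))) | _ => 0 end.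
Lemma E02_zero j : (6 <= j)%N -> E02 j = 0.
Proof. by case: j => [|[|[|[|[|[|j]]]]]] //= H; exfalso; lia. Qed.
Lemma dec_02 j : (1 <= j)%N -> (conv V0 V2) j = r02 j%:R + E02 j.
Proof.
move=> Hj; case: (leqP 6 j) => HT; first by rewrite cf_02 // E02_zero // addr0.
move: Hj HT; case: j => [|[|[|[|[|[|j]]]]]] //= _ _.
all: rewrite /conv unlock /= ?subSS ?subn0 ; unfold V0, V1, V2; unfold E0, E02, E1, E2, V0, V1, V2, q0, q1, q2, r02; rewrite /=; by field.
Qed.
Definition G11 (m x : R) : R := ((- (128 * 1000 + 100) - (190 * 1000 + 320) * x - (47 * 1000 + 580) * x ^+ 2 + (70 * 1000 + 699) * m + (74 * 1000 + 420) * m * x + (18 * 1000 + 605) * m * x ^+ 2 + (111 * 1000 + 630) * m ^+ 2 + (167 * 1000 + 445) * m ^+ 2 * x + (55 * 1000 + 815) * m ^+ 2 * x ^+ 2 - (37 * 1000 + 210) * m ^+ 3 + (37 * 1000 + 210) * m ^+ 3 * x + (37 * 1000 + 210) * m ^+ 3 * x ^+ 2 - (55 * 1000 + 815) * m ^+ 4 - (55 * 1000 + 815) * m ^+ 4 * x + (22 * 1000 + 326) * m ^+ 5) / (622 * 1000 + 80)).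
Definition r11 (x : R) : R := ((- (144 * 1000 + 570) - (86 * 1000 + 681) * x + (202 * 1000 + 520) * x ^+ 2 + (148 * 1000 + 840) * x ^+ 3 + (37 * 1000 + 210) * x ^+ 4 + (3 * 1000 + 721) * x ^+ 5) / (622 * 1000 + 80)).
Lemma cf_11 k : (5 <= k)%N -> conv V1 V1 k = r11 k%:R.
Proof.
move=> Hk.
have Kk : (3 <= k)%N by lia.
rewrite (@conv_split V1 V1 q1 E1 3 k isT V1_dec E1_zero Kk).
have HS : \sum_(1 <= j < k) (fun j => V1 j * q1 (k%:R - j%:R)) j = G11 k%:R k%:R.
  have KAk : (3 <= k)%N by lia.
  apply: (@sum_anti (fun j => V1 j * q1 (k%:R - j%:R)) (fun m => G11 m%:R k%:R) 3 isT _ _ k KAk).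
  - move=> m Hm; rewrite /= (V1_big Hm) ; unfold V0, V1, V2; unfold E0, E1, E2, G11, V0, V1, V2, q0, q1, q2, r11; rewrite /=; by field.
  - rewrite unlock /= ; unfold V0, V1, V2; unfold E0, E1, E2, G11, V0, V1, V2, q0, q1, q2, r11; rewrite /=; by field.
rewrite HS; clear HS Kk; move: Hk; case: k => [|[|[|[|[|k]]]]] //= _.
rewrite unlock /= ?subSS ?subn0 ; unfold V0, V1, V2; unfold E0, E1, E2, G11, V0, V1, V2, q0, q1, q2, r11; rewrite /=; by field.
Qed.
Definition E11 (j : nat) : R := match j with | 1 => (- (671 / (2 * 1000 + 592))) | 2 => (((1 * 1000 + 517) / (10 * 1000 + 368))) | 3 => (- (11 / 288)) | 4 => ((1 / 256)) | _ => 0 end.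
Lemma E11_zero j : (5 <= j)%N -> E11 j = 0.
Proof. by case: j => [|[|[|[|[|j]]]]] //= H; exfalso; lia. Qed.
Lemma dec_11 j : (1 <= j)%N -> (conv V1 V1) j = r11 j%:R + E11 j.
Proof.
move=> Hj; case: (leqP 5 j) => HT; first by rewrite cf_11 // E11_zero // addr0.
move: Hj HT; case: j => [|[|[|[|[|j]]]]] //= _ _.
all: rewrite /conv unlock /= ?subSS ?subn0 ; unfold V0, V1, V2; unfold E0, E1, E11, E2, V0, V1, V2, q0, q1, q2, r11; rewrite /=; by field.
Qed.
Definition Gt000 (m x : R) : R := ((120 + 20 * x - 120 * x ^+ 2 - 20 * x ^+ 3 - 46 * m + 80 * m * x + 80 * m * x ^+ 2 + 10 * m * x ^+ 3 - 95 * m ^+ 2 - 25 * m ^+ 2 * x + 60 * m ^+ 2 * x ^+ 2 + 10 * m ^+ 2 * x ^+ 3 - 10 * m ^+ 3 - 90 * m ^+ 3 * x - 20 * m ^+ 3 * x ^+ 2 + 35 * m ^+ 4 + 15 * m ^+ 4 * x - 4 * m ^+ 5) / 120).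
Definition rt000 (x : R) : R := ((120 - 26 * x - 135 * x ^+ 2 + 25 * x ^+ 3 + 15 * x ^+ 4 + 1 * x ^+ 5) / 120).
Lemma cf_t000 k : (1 <= k)%N -> conv V0 (conv V0 V0) k = rt000 k%:R.
Proof.
move=> Hk.
have Kk : (1 <= k)%N by lia.
rewrite (@conv_split V0 (conv V0 V0) r00 E00 1 k isT dec_00 E00_zero Kk).
have HS : \sum_(1 <= j < k) (fun j => V0 j * r00 (k%:R - j%:R)) j = Gt000 k%:R k%:R.
  have KAk : (1 <= k)%N by lia.
  apply: (@sum_anti (fun j => V0 j * r00 (k%:R - j%:R)) (fun m => Gt000 m%:R k%:R) 1 isT _ _ k KAk).
  - move=> m Hm; rewrite /= (V0_big Hm) ; unfold V0, V1, V2; unfold E0, E00, E1, E2, Gt000, V0, V1, V2, q0, q1, q2, r00, rt000; rewrite /=; by field.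
  - rewrite unlock /= ; unfold V0, V1, V2; unfold E0, E00, E1, E2, Gt000, V0, V1, V2, q0, q1, q2, r00, rt000; rewrite /=; by field.
rewrite HS; clear HS Kk; move: Hk; case: k => [|k] //= _.
rewrite unlock /= ?subSS ?subn0 ; unfold V0, V1, V2; unfold E0, E00, E1, E2, Gt000, V0, V1, V2, q0, q1, q2, r00, rt000; rewrite /=; by field.
Qed.
Definition Gt001 (m x : R) : R := ((- (18 * 1000 + 720) - (2 * 1000 + 40) * x + (20 * 1000 + 130) * x ^+ 2 + (14 * 1000 + 640) * x ^+ 3 + (1 * 1000 + 830) * x ^+ 4 + (6 * 1000 + 258) * m - (19 * 1000 + 964) * m * x - (26 * 1000 + 535) * m * x ^+ 2 - (9 * 1000 + 760) * m * x ^+ 3 - 915 * m * x ^+ 4 + (18 * 1000 + 205) * m ^+ 2 + (13 * 1000 + 830) * m ^+ 2 * x - (7 * 1000 + 320) * m ^+ 2 * x ^+ 2 - (7 * 1000 + 320) * m ^+ 2 * x ^+ 3 - 915 * m ^+ 2 * x ^+ 4 - 375 * m ^+ 3 + (19 * 1000 + 520) * m ^+ 3 * x + (16 * 1000 + 470) * m ^+ 3 * x ^+ 2 + (2 * 1000 + 440) * m ^+ 3 * x ^+ 3 - (8 * 1000 + 540) * m ^+ 4 - (12 * 1000 + 810) * m ^+ 4 * x - (2 * 1000 + 745) * m ^+ 4 * x ^+ 2 + (3 * 1000 + 477) * m ^+ 5 + (1 * 1000 + 464) * m ^+ 5 * x - 305 * m ^+ 6) / (51 * 1000 + 840)).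
Definition rt001 (x : R) : R := ((- (15 * 1000 + 480) + (16 * 1000 + 818) * x + (18 * 1000 + 371) * x ^+ 2 + (1 * 1000 + 560) * x ^+ 3 - (4 * 1000 + 270) * x ^+ 4 - (1 * 1000 + 98) * x ^+ 5 - 61 * x ^+ 6) / (51 * 1000 + 840)).
Lemma cf_t001 k : (3 <= k)%N -> conv V0 (conv V0 V1) k = rt001 k%:R.
Proof.
move=> Hk.
have Kk : (3 <= k)%N by lia.
rewrite (@conv_split V0 (conv V0 V1) r01 E01 3 k isT dec_01 E01_zero Kk).
have HS : \sum_(1 <= j < k) (fun j => V0 j * r01 (k%:R - j%:R)) j = Gt001 k%:R k%:R.
  have KAk : (1 <= k)%N by lia.
  apply: (@sum_anti (fun j => V0 j * r01 (k%:R - j%:R)) (fun m => Gt001 m%:R k%:R) 1 isT _ _ k KAk).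
  - move=> m Hm; rewrite /= (V0_big Hm) ; unfold V0, V1, V2; unfold E0, E01, E1, E2, Gt001, V0, V1, V2, q0, q1, q2, r01, rt001; rewrite /=; by field.
  - rewrite unlock /= ; unfold V0, V1, V2; unfold E0, E01, E1, E2, Gt001, V0, V1, V2, q0, q1, q2, r01, rt001; rewrite /=; by field.
rewrite HS; clear HS Kk; move: Hk; case: k => [|[|[|k]]] //= _.
rewrite unlock /= ?subSS ?subn0 ; unfold V0, V1, V2; unfold E0, E01, E1, E2, Gt001, V0, V1, V2, q0, q1, q2, r01, rt001; rewrite /=; by field.
Qed.
Definition Gt100 (m x : R) : R := ((- (15 * 1000 + 480) + (15 * 1000 + 720) * x + (14 * 1000 + 40) * x ^+ 2 + (1 * 1000 + 560) * x ^+ 3 + (1 * 1000 + 98) * m - (8 * 1000 + 174) * m * x - (5 * 1000 + 490) * m * x ^+ 2 - 610 * m * x ^+ 3 + (12 * 1000 + 505) * m ^+ 2 - (9 * 1000 + 150) * m ^+ 2 * x - (13 * 1000 + 725) * m ^+ 2 * x ^+ 2 - (1 * 1000 + 830) * m ^+ 2 * x ^+ 3 + (14 * 1000 + 640) * m ^+ 3 + (12 * 1000 + 200) * m ^+ 3 * x - (5 * 1000 + 490) * m ^+ 3 * x ^+ 2 - (1 * 1000 + 220) * m ^+ 3 * x ^+ 3 - (2 * 1000 + 135) * m ^+ 4 + (10 * 1000 + 980) * m ^+ 4 * x + (2 * 1000 + 745) * m ^+ 4 * x ^+ 2 - (4 * 1000 + 758) * m ^+ 5 - (2 * 1000 + 196)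 * m ^+ 5 * x + 610 * m ^+ 6) / (51 * 1000 + 840)).
Definition rt100 (x : R) : R := ((- (15 * 1000 + 480) + (16 * 1000 + 818) * x + (18 * 1000 + 371) * x ^+ 2 + (1 * 1000 + 560) * x ^+ 3 - (4 * 1000 + 270) * x ^+ 4 - (1 * 1000 + 98) * x ^+ 5 - 61 * x ^+ 6) / (51 * 1000 + 840)).
Lemma cf_t100 k : (3 <= k)%N -> conv V1 (conv V0 V0) k = rt100 k%:R.
Proof.
move=> Hk.
have Kk : (1 <= k)%N by lia.
rewrite (@conv_split V1 (conv V0 V0) r00 E00 1 k isT dec_00 E00_zero Kk).
have HS : \sum_(1 <= j < k) (fun j => V1 j * r00 (k%:R - j%:R)) j = Gt100 k%:R k%:R.
  have KAk : (3 <= k)%N by lia.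
  apply: (@sum_anti (fun j => V1 j * r00 (k%:R - j%:R)) (fun m => Gt100 m%:R k%:R) 3 isT _ _ k KAk).
  - move=> m Hm; rewrite /= (V1_big Hm) ; unfold V0, V1, V2; unfold E0, E00, E1, E2, Gt100, V0, V1, V2, q0, q1, q2, r00, rt100; rewrite /=; by field.
  - rewrite unlock /= ; unfold V0, V1, V2; unfold E0, E00, E1, E2, Gt100, V0, V1, V2, q0, q1, q2, r00, rt100; rewrite /=; by field.
rewrite HS; clear HS Kk; move: Hk; case: k => [|[|[|k]]] //= _.
rewrite unlock /= ?subSS ?subn0 ; unfold V0, V1, V2; unfold E0, E00, E1, E2, Gt100, V0, V1, V2, q0, q1, q2, r00, rt100; rewrite /=; by field.
Qed.
Definition Gt002 (m x : R) : R := ((((339 * 1000 + 343) * 1000 + 200) - ((142 * 1000 + 156) * 1000 + 140) * x - ((593 * 1000 + 928) * 1000 + 510) * x ^+ 2 - ((561 * 1000 + 591) * 1000 + 30) * x ^+ 3 - ((160 * 1000 + 549) * 1000 + 410) * x ^+ 4 - ((11 * 1000 + 721) * 1000 + 150) * x ^+ 5 - ((10 * 1000 + 209) * 1000 + 156) * m + ((767 * 1000 + 278) * 1000 + 988) * m * x + (((1 * 1000 + 23) * 1000 + 11) * 1000 + 745) * m * x ^+ 2 + ((514 * 1000 + 396) * 1000 + 645) * m * x ^+ 3 + ((99 * 1000 + 809) * 1000 + 955) * m * x ^+ 4 + ((5 * 1000 + 860) * 1000 + 575) * m * x ^+ 5 - ((470 * 1000 + 953) * 1000 + 840) * m ^+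 2 - ((515 * 1000 + 548) * 1000 + 425) * m ^+ 2 * x + ((26 * 1000 + 837) * 1000 + 265) * m ^+ 2 * x ^+ 2 + ((251 * 1000 + 492) * 1000 + 640) * m ^+ 2 * x ^+ 3 + ((80 * 1000 + 274) * 1000 + 705) * m ^+ 2 * x ^+ 4 + ((5 * 1000 + 860) * 1000 + 575) * m ^+ 2 * x ^+ 5 + ((2 * 1000 + 695) * 1000 + 35) * m ^+ 3 - ((550 * 1000 + 179) * 1000 + 665) * m ^+ 3 * x - ((702 * 1000 + 605) * 1000 + 190) * m ^+ 3 * x ^+ 2 - ((233 * 1000 + 601) * 1000 + 130) * m ^+ 3 * x ^+ 3 - ((19 * 1000 + 535) * 1000 + 250) * m ^+ 3 * x ^+ 4 + ((270 * 1000 + 616) * 1000 + 955) * m ^+ 4 + ((576 * 1000 + 858) * 1000 + 870) * m ^+ 4 * x + ((270 * 1000 + 126) * 1000 + 990) * m ^+ 4 * x ^+ 2 + ((29 * 1000 + 302) * 1000 + 875) * m ^+ 4 * x ^+ 3 - ((160 * 1000 + 483) * 1000 + 29) * m ^+ 5 - ((146 * 1000 + 21) * 1000 + 253) * m ^+ 5 * x - ((23 * 1000 + 442) * 1000 + 300) * m ^+ 5 * x ^+ 2 + ((30 * 1000 + 665) * 1000 + 285) * m ^+ 6 + ((9 * 1000 + 767) * 1000 + 625) * m ^+ 6 * x - ((1 * 1000 + 674) * 1000 + 450) * m ^+ 7) / (((2 * 1000 + 612) * 1000 + 736) * 1000 + 0)).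
Definition rt002 (x : R) : R := ((- ((51 * 1000 + 725) * 1000 + 520) - ((754 * 1000 + 902) * 1000 + 336) * x - ((297 * 1000 + 603) * 1000 + 362) * x ^+ 2 - ((51 * 1000 + 432) * 1000 + 675) * x ^+ 3 + ((101 * 1000 + 121) * 1000 + 790) * x ^+ 4 + ((53 * 1000 + 352) * 1000 + 96) * x ^+ 5 + ((7 * 1000 + 305) * 1000 + 172) * x ^+ 6 + (279 * 1000 + 75) * x ^+ 7) / (((2 * 1000 + 612) * 1000 + 736) * 1000 + 0)).
Lemma cf_t002 k : (6 <= k)%N -> conv V0 (conv V0 V2) k = rt002 k%:R.
Proof.
move=> Hk.
have Kk : (6 <= k)%N by lia.
rewrite (@conv_split V0 (conv V0 V2) r02 E02 6 k isT dec_02 E02_zero Kk).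
have HS : \sum_(1 <= j < k) (fun j => V0 j * r02 (k%:R - j%:R)) j = Gt002 k%:R k%:R.
  have KAk : (1 <= k)%N by lia.
  apply: (@sum_anti (fun j => V0 j * r02 (k%:R - j%:R)) (fun m => Gt002 m%:R k%:R) 1 isT _ _ k KAk).
  - move=> m Hm; rewrite /= (V0_big Hm) ; unfold V0, V1, V2; unfold E0, E02, E1, E2, Gt002, V0, V1, V2, q0, q1, q2, r02, rt002; rewrite /=; by field.
  - rewrite unlock /= ; unfold V0, V1, V2; unfold E0, E02, E1, E2, Gt002, V0, V1, V2, q0, q1, q2, r02, rt002; rewrite /=; by field.
rewrite HS; clear HS Kk; move: Hk; case: k => [|[|[|[|[|[|k]]]]]] //= _.
rewrite unlock /= ?subSS ?subn0 ; unfold V0, V1, V2; unfold E0, E02, E1, E2, Gt002, V0, V1, V2, q0, q1, q2, r02, rt002; rewrite /=; by field.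
Qed.
Definition Gt011 (m x : R) : R := ((((12 * 1000 + 143) * 1000 + 880) + ((7 * 1000 + 281) * 1000 + 204) * x - ((17 * 1000 + 11) * 1000 + 680) * x ^+ 2 - ((12 * 1000 + 502) * 1000 + 560) * x ^+ 3 - ((3 * 1000 + 125) * 1000 + 640) * x ^+ 4 - (312 * 1000 + 564) * x ^+ 5 - ((5 * 1000 + 358) * 1000 + 606) * m + ((14 * 1000 + 316) * 1000 + 456) * m * x + ((24 * 1000 + 238) * 1000 + 228) * m * x ^+ 2 + ((10 * 1000 + 939) * 1000 + 740) * m * x ^+ 3 + ((2 * 1000 + 83) * 1000 + 760) * m * x ^+ 4 + (156 * 1000 + 282) * m * x ^+ 5 - ((13 * 1000 + 684) * 1000 + 923) * m ^+ 2 - ((16 * 1000 + 273) * 1000 + 397) * m ^+ 2 * x + ((3 * 1000 + 35) * 1000 + 970) * m ^+ 2 * x ^+ 2 + ((5 * 1000 + 469) * 1000 + 870) * m ^+ 2 * x ^+ 3 + ((1 * 1000 + 562) * 1000 + 820) * m ^+ 2 * x ^+ 4 + (156 * 1000 + 282) * m ^+ 2 * x ^+ 5 + ((2 * 1000 + 769) * 1000 + 522) * m ^+ 3 - ((14 * 1000 + 987) * 1000 + 700) * m ^+ 3 * x - ((15 * 1000 + 107) * 1000 + 260) * m ^+ 3 * x ^+ 2 - ((4 * 1000 + 688) * 1000 + 460) * m ^+ 3 * x ^+ 3 - (520 * 1000 + 940) * m ^+ 3 * x ^+ 4 + ((6 * 1000 + 987) * 1000 + 855) * m ^+ 4 + ((12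 * 1000 + 372) * 1000 + 325) * m ^+ 4 * x + ((5 * 1000 + 469) * 1000 + 870) * m ^+ 4 * x ^+ 2 + (781 * 1000 + 410) * m ^+ 4 * x ^+ 3 - ((3 * 1000 + 438) * 1000 + 204) * m ^+ 5 - ((2 * 1000 + 969) * 1000 + 358) * m ^+ 5 * x - (625 * 1000 + 128) * m ^+ 5 * x ^+ 2 + (625 * 1000 + 128) * m ^+ 6 + (260 * 1000 + 470) * m ^+ 6 * x - (44 * 1000 + 652) * m ^+ 7) / ((52 * 1000 + 254) * 1000 + 720)).
Definition rt011 (x : R) : R := ((((7 * 1000 + 877) * 1000 + 520) - ((5 * 1000 + 750) * 1000 + 802) * x - ((16 * 1000 + 380) * 1000 + 147) * x ^+ 2 - ((1 * 1000 + 768) * 1000 + 207) * x ^+ 3 + ((2 * 1000 + 850) * 1000 + 225) * x ^+ 4 + ((1 * 1000 + 67) * 1000 + 927) * x ^+ 5 + (156 * 1000 + 282) * x ^+ 6 + (7 * 1000 + 442) * x ^+ 7) / ((52 * 1000 + 254) * 1000 + 720)).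
Lemma cf_t011 k : (5 <= k)%N -> conv V0 (conv V1 V1) k = rt011 k%:R.
Proof.
move=> Hk.
have Kk : (5 <= k)%N by lia.
rewrite (@conv_split V0 (conv V1 V1) r11 E11 5 k isT dec_11 E11_zero Kk).
have HS : \sum_(1 <= j < k) (fun j => V0 j * r11 (k%:R - j%:R)) j = Gt011 k%:R k%:R.
  have KAk : (1 <= k)%N by lia.
  apply: (@sum_anti (fun j => V0 j * r11 (k%:R - j%:R)) (fun m => Gt011 m%:R k%:R) 1 isT _ _ k KAk).
  - move=> m Hm; rewrite /= (V0_big Hm) ; unfold V0, V1, V2; unfold E0, E1, E11, E2, Gt011, V0, V1, V2, q0, q1, q2, r11, rt011; rewrite /=; by field.
  - rewrite unlock /= ; unfold V0, V1, V2; unfold E0, E1, E11, E2, Gt011, V0, V1, V2, q0, q1, q2, r11, rt011; rewrite /=; by field.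
rewrite HS; clear HS Kk; move: Hk; case: k => [|[|[|[|[|k]]]]] //= _.
rewrite unlock /= ?subSS ?subn0 ; unfold V0, V1, V2; unfold E0, E1, E11, E2, Gt011, V0, V1, V2, q0, q1, q2, r11, rt011; rewrite /=; by field.
Qed.
Definition Gt101 (m x : R) : R := ((((6 * 1000 + 494) * 1000 + 40) - ((3 * 1000 + 61) * 1000 + 800) * x - ((11 * 1000 + 42) * 1000 + 220) * x ^+ 2 - ((3 * 1000 + 996) * 1000 + 720) * x ^+ 3 - (333 * 1000 + 60) * x ^+ 4 + (77 * 1000 + 958) * m + ((5 * 1000 + 428) * 1000 + 878) * m * x + ((5 * 1000 + 183) * 1000 + 353) * m * x ^+ 2 + ((1 * 1000 + 562) * 1000 + 820) * m * x ^+ 3 + (130 * 1000 + 235) * m * x ^+ 4 - ((5 * 1000 + 386) * 1000 + 605) * m ^+ 2 + ((3 * 1000 + 341) * 1000 + 275) * m ^+ 2 * x + ((8 * 1000 + 986) * 1000 + 215) * m ^+ 2 * x ^+ 2 + ((3 * 1000 + 907) * 1000 + 50) * m ^+ 2 * x ^+ 3 + (390 * 1000 + 705) * m ^+ 2 * x ^+ 4 - ((6 * 1000 + 296) * 1000 + 115) * m ^+ 3 - ((9 * 1000 + 927) * 1000 + 750) * m ^+ 3 * x - ((1 * 1000 + 823) * 1000 + 290) * m ^+ 3 * x ^+ 2 + ((1 * 1000 + 562) * 1000 + 820) * m ^+ 3 * x ^+ 3 + (260 * 1000 + 470) * m ^+ 3 * x ^+ 4 + ((2 * 1000 + 562) *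 1000 + 0) * m ^+ 4 - ((3 * 1000 + 255) * 1000 + 875) * m ^+ 4 * x - ((4 * 1000 + 688) * 1000 + 460) * m ^+ 4 * x ^+ 2 - (781 * 1000 + 410) * m ^+ 4 * x ^+ 3 + ((2 * 1000 + 109) * 1000 + 807) * m ^+ 5 + ((4 * 1000 + 63) * 1000 + 332) * m ^+ 5 * x + (937 * 1000 + 692) * m ^+ 5 * x ^+ 2 - ((1 * 1000 + 172) * 1000 + 115) * m ^+ 6 - (520 * 1000 + 940) * m ^+ 6 * x + (111 * 1000 + 630) * m ^+ 7) / ((52 * 1000 + 254) * 1000 + 720)).
Definition rt101 (x : R) : R := ((((7 * 1000 + 877) * 1000 + 520) - ((5 * 1000 + 750) * 1000 + 802) * x - ((16 * 1000 + 380) * 1000 + 147) * x ^+ 2 - ((1 * 1000 + 768) * 1000 + 207) * x ^+ 3 + ((2 * 1000 + 850) * 1000 + 225) * x ^+ 4 + ((1 * 1000 + 67) * 1000 + 927) * x ^+ 5 + (156 * 1000 + 282) * x ^+ 6 + (7 * 1000 + 442) * x ^+ 7) / ((52 * 1000 + 254) * 1000 + 720)).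
Lemma cf_t101 k : (5 <= k)%N -> conv V1 (conv V0 V1) k = rt101 k%:R.
Proof.
move=> Hk.
have Kk : (3 <= k)%N by lia.
rewrite (@conv_split V1 (conv V0 V1) r01 E01 3 k isT dec_01 E01_zero Kk).
have HS : \sum_(1 <= j < k) (fun j => V1 j * r01 (k%:R - j%:R)) j = Gt101 k%:R k%:R.
  have KAk : (3 <= k)%N by lia.
  apply: (@sum_anti (fun j => V1 j * r01 (k%:R - j%:R)) (fun m => Gt101 m%:R k%:R) 3 isT _ _ k KAk).
  - move=> m Hm; rewrite /= (V1_big Hm) ; unfold V0, V1, V2; unfold E0, E01, E1, E2, Gt101, V0, V1, V2, q0, q1, q2, r01, rt101; rewrite /=; by field.
  - rewrite unlock /= ; unfold V0, V1, V2; unfold E0, E01, E1, E2, Gt101, V0, V1, V2, q0, q1, q2, r01, rt101; rewrite /=; by field.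
rewrite HS; clear HS Kk; move: Hk; case: k => [|[|[|[|[|k]]]]] //= _.
rewrite unlock /= ?subSS ?subn0 ; unfold V0, V1, V2; unfold E0, E01, E1, E2, Gt101, V0, V1, V2, q0, q1, q2, r01, rt101; rewrite /=; by field.
Qed.
Definition Gt200 (m x : R) : R := ((- ((51 * 1000 + 725) * 1000 + 520) - ((746 * 1000 + 202) * 1000 + 240) * x - ((189 * 1000 + 176) * 1000 + 400) * x ^+ 2 - ((6 * 1000 + 501) * 1000 + 600) * x ^+ 3 - ((8 * 1000 + 700) * 1000 + 96) * m + ((217 * 1000 + 18) * 1000 + 298) * m * x + ((133 * 1000 + 920) * 1000 + 780) * m * x ^+ 2 + ((14 * 1000 + 445) * 1000 + 970) * m * x ^+ 3 - ((325 * 1000 + 445) * 1000 + 260) * m ^+ 2 + ((343 * 1000 + 668) * 1000 + 675) * m ^+ 2 * x + ((412 * 1000 + 942) * 1000 + 950) * m ^+ 2 * x ^+ 2 + ((53 * 1000 + 105) * 1000 + 535) * m ^+ 2 * x ^+ 3 - ((522 * 1000 + 520) * 1000 + 530) * m ^+ 3 - ((249 * 1000 + 848) * 1000 + 900) * m ^+ 3 * x + ((266 * 1000 + 760) * 1000 + 480) * m ^+ 3 * x ^+ 2 + ((48 * 1000 + 427) * 1000 + 190) * m ^+ 3 * x ^+ 3 - ((76 * 1000 + 418) * 1000 + 230) * m ^+ 4 - ((426 * 1000 + 77) * 1000 + 85) * m ^+ 4 * x - ((35 * 1000 + 703) * 1000 + 990) * m ^+ 4 * x ^+ 2 + ((9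 * 1000 + 767) * 1000 + 625) * m ^+ 4 * x ^+ 3 + ((159 * 1000 + 563) * 1000 + 166) * m ^+ 5 - ((30 * 1000 + 42) * 1000 + 558) * m ^+ 5 * x - ((23 * 1000 + 442) * 1000 + 300) * m ^+ 5 * x ^+ 2 + ((24 * 1000 + 624) * 1000 + 530) * m ^+ 6 + ((19 * 1000 + 535) * 1000 + 250) * m ^+ 6 * x - ((5 * 1000 + 581) * 1000 + 500) * m ^+ 7) / (((2 * 1000 + 612) * 1000 + 736) * 1000 + 0)).
Definition rt200 (x : R) : R := ((- ((51 * 1000 + 725) * 1000 + 520) - ((754 * 1000 + 902) * 1000 + 336) * x - ((297 * 1000 + 603) * 1000 + 362) * x ^+ 2 - ((51 * 1000 + 432) * 1000 + 675) * x ^+ 3 + ((101 * 1000 + 121) * 1000 + 790) * x ^+ 4 + ((53 * 1000 + 352) * 1000 + 96) * x ^+ 5 + ((7 * 1000 + 305) * 1000 + 172) * x ^+ 6 + (279 * 1000 + 75) * x ^+ 7) / (((2 * 1000 + 612) * 1000 + 736) * 1000 + 0)).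
Lemma cf_t200 k : (6 <= k)%N -> conv V2 (conv V0 V0) k = rt200 k%:R.
Proof.
move=> Hk.
have Kk : (1 <= k)%N by lia.
rewrite (@conv_split V2 (conv V0 V0) r00 E00 1 k isT dec_00 E00_zero Kk).
have HS : \sum_(1 <= j < k) (fun j => V2 j * r00 (k%:R - j%:R)) j = Gt200 k%:R k%:R.
  have KAk : (6 <= k)%N by lia.
  apply: (@sum_anti (fun j => V2 j * r00 (k%:R - j%:R)) (fun m => Gt200 m%:R k%:R) 6 isT _ _ k KAk).
  - move=> m Hm; rewrite /= (V2_big Hm) ; unfold V0, V1, V2; unfold E0, E00, E1, E2, Gt200, V0, V1, V2, q0, q1, q2, r00, rt200; rewrite /=; by field.
  - rewrite unlock /= ; unfold V0, V1, V2; unfold E0, E00, E1, E2, Gt200, V0, V1, V2, q0, q1, q2, r00, rt200; rewrite /=; by field.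
rewrite HS; clear HS Kk; move: Hk; case: k => [|[|[|[|[|[|k]]]]]] //= _.
rewrite unlock /= ?subSS ?subn0 ; unfold V0, V1, V2; unfold E0, E00, E1, E2, Gt200, V0, V1, V2, q0, q1, q2, r00, rt200; rewrite /=; by field.
Qed.
Definition Gw00 (m x : R) : R := ((- 30 * x ^+ 2 - 30 * x ^+ 3 + 24 * m + 80 * m * x + 65 * m * x ^+ 2 + 15 * m * x ^+ 3 - 60 * m ^+ 2 - 60 * m ^+ 2 * x + 15 * m ^+ 2 * x ^+ 2 + 15 * m ^+ 2 * x ^+ 3 - 80 * m ^+ 3 * x - 50 * m ^+ 3 * x ^+ 2 + 60 * m ^+ 4 + 60 * m ^+ 4 * x - 24 * m ^+ 5) / 30).
Definition rw00 (x : R) : R := ((24 * x - 10 * x ^+ 2 - 25 * x ^+ 3 + 10 * x ^+ 4 + 1 * x ^+ 5) / 30).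
Lemma cf_w00 k : (1 <= k)%N -> wconv V0 V0 k = rw00 k%:R.
Proof.
move=> Hk.
have Kk : (1 <= k)%N by lia.
rewrite (@wconv_split V0 V0 q0 E0 1 k isT V0_dec E0_zero Kk).
have HS : \sum_(1 <= j < k) (fun j => (k%:R - 2 * j%:R) ^+ 2 * (V0 j * q0 (k%:R - j%:R))) j = Gw00 k%:R k%:R.
  have KAk : (1 <= k)%N by lia.
  apply: (@sum_anti (fun j => (k%:R - 2 * j%:R) ^+ 2 * (V0 j * q0 (k%:R - j%:R))) (fun m => Gw00 m%:R k%:R) 1 isT _ _ k KAk).
  - move=> m Hm; rewrite /= (V0_big Hm) ; unfold V0, V1, V2; unfold E0, E1, E2, Gw00, V0, V1, V2, q0, q1, q2, rw00; rewrite /=; by field.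
  - rewrite unlock /= ; unfold V0, V1, V2; unfold E0, E1, E2, Gw00, V0, V1, V2, q0, q1, q2, rw00; rewrite /=; by field.
rewrite HS; clear HS Kk; move: Hk; case: k => [|k] //= _.
rewrite unlock /= ?subSS ?subn0 ; unfold V0, V1, V2; unfold E0, E1, E2, Gw00, V0, V1, V2, q0, q1, q2, rw00; rewrite /=; by field.
Qed.
Definition Gw01 (m x : R) : R := (((3 * 1000 + 660) * x ^+ 2 + (7 * 1000 + 320) * x ^+ 3 + (3 * 1000 + 660) * x ^+ 4 - (2 * 1000 + 928) * m - (16 * 1000 + 104) * m * x - (21 * 1000 + 960) * m * x ^+ 2 - (10 * 1000 + 980) * m * x ^+ 3 - (1 * 1000 + 830) * m * x ^+ 4 + (12 * 1000 + 200) * m ^+ 2 + (25 * 1000 + 620) * m ^+ 2 * x + (10 * 1000 + 65) * m ^+ 2 * x ^+ 2 - (3 * 1000 + 660) * m ^+ 2 * x ^+ 3 - (1 * 1000 + 830) * m ^+ 2 * x ^+ 4 - (7 * 1000 + 320) * m ^+ 3 + (7 * 1000 + 320) * m ^+ 3 * x + (20 * 1000 + 130) * m ^+ 3 * x ^+ 2 + (7 * 1000 + 320) * m ^+ 3 * x ^+ 3 - (9 * 1000 + 760) * m ^+ 4 - (25 * 1000 + 620) * m ^+ 4 * x - (11 * 1000 + 895) * m ^+ 4 * x ^+ 2 + (10 * 1000 + 248) * m ^+ 5 + (8 * 1000 + 784) * m ^+ 5 * x - (2 * 1000 + 440) * m ^+ 6) / (8 * 1000 + 640)).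
Definition rw01 (x : R) : R := ((- (8 * 1000 + 640) - 528 * x + (5 * 1000 + 456) * x ^+ 2 + (1 * 1000 + 560) * x ^+ 3 + 305 * x ^+ 4 - 732 * x ^+ 5 - 61 * x ^+ 6) / (8 * 1000 + 640)).
Lemma cf_w01 k : (3 <= k)%N -> wconv V0 V1 k = rw01 k%:R.
Proof.
move=> Hk.
have Kk : (3 <= k)%N by lia.
rewrite (@wconv_split V0 V1 q1 E1 3 k isT V1_dec E1_zero Kk).
have HS : \sum_(1 <= j < k) (fun j => (k%:R - 2 * j%:R) ^+ 2 * (V0 j * q1 (k%:R - j%:R))) j = Gw01 k%:R k%:R.
  have KAk : (1 <= k)%N by lia.
  apply: (@sum_anti (fun j => (k%:R - 2 * j%:R) ^+ 2 * (V0 j * q1 (k%:R - j%:R))) (fun m => Gw01 m%:R k%:R) 1 isT _ _ k KAk).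
  - move=> m Hm; rewrite /= (V0_big Hm) ; unfold V0, V1, V2; unfold E0, E1, E2, Gw01, V0, V1, V2, q0, q1, q2, rw01; rewrite /=; by field.
  - rewrite unlock /= ; unfold V0, V1, V2; unfold E0, E1, E2, Gw01, V0, V1, V2, q0, q1, q2, rw01; rewrite /=; by field.
rewrite HS; clear HS Kk; move: Hk; case: k => [|[|[|k]]] //= _.
rewrite unlock /= ?subSS ?subn0 ; unfold V0, V1, V2; unfold E0, E1, E2, Gw01, V0, V1, V2, q0, q1, q2, rw01; rewrite /=; by field.
Qed.
Definition Gw02 (m x : R) : R := ((- ((125 * 1000 + 746) * 1000 + 320) * x ^+ 2 - ((290 * 1000 + 563) * 1000 + 140) * x ^+ 3 - ((203 * 1000 + 887) * 1000 + 320) * x ^+ 4 - ((39 * 1000 + 70) * 1000 + 500) * x ^+ 5 + ((91 * 1000 + 666) * 1000 + 656) * m + ((615 * 1000 + 796) * 1000 + 608) * m * x + (((1 * 1000 + 21) * 1000 + 459) * 1000 + 670) * m * x ^+ 2 + ((676 * 1000 + 779) * 1000 + 460) * m * x ^+ 3 + ((193 * 1000 + 108) * 1000 + 160) * m * x ^+ 4 + ((19 * 1000 + 535) * 1000 + 250) * m * x ^+ 5 - ((471 * 1000 + 248) * 1000 + 400) * m ^+ 2 - (((1 * 1000 + 244) * 1000 + 882) * 1000 + 240) * m ^+ 2 * x - ((843 * 1000 + 951) * 1000 + 255) * m ^+ 2 * x ^+ 2 - ((40 * 1000 + 303) * 1000 + 305) * m ^+ 2 * x ^+ 3 + ((101 *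 1000 + 943) * 1000 + 660) * m ^+ 2 * x ^+ 4 + ((19 * 1000 + 535) * 1000 + 250) * m ^+ 2 * x ^+ 5 + ((407 * 1000 + 774) * 1000 + 640) * m ^+ 3 + ((61 * 1000 + 71) * 1000 + 360) * m ^+ 3 * x - ((763 * 1000 + 234) * 1000 + 10) * m ^+ 3 * x ^+ 2 - ((531 * 1000 + 497) * 1000 + 890) * m ^+ 3 * x ^+ 3 - ((91 * 1000 + 164) * 1000 + 500) * m ^+ 3 * x ^+ 4 + ((283 * 1000 + 229) * 1000 + 520) * m ^+ 4 + (((1 * 1000 + 140) * 1000 + 694) * 1000 + 240) * m ^+ 4 * x + ((906 * 1000 + 824) * 1000 + 415) * m ^+ 4 * x ^+ 2 + ((185 * 1000 + 584) * 1000 + 875) * m ^+ 4 * x ^+ 3 - ((477 * 1000 + 115) * 1000 + 296) * m ^+ 5 - ((676 * 1000 + 867) * 1000 + 968) * m ^+ 5 * x - ((195 * 1000 + 352) * 1000 + 500) * m ^+ 5 * x ^+ 2 + ((188 * 1000 + 18) * 1000 + 880) * m ^+ 6 + ((104 * 1000 + 188) * 1000 + 0) * m ^+ 6 * x - ((22 * 1000 + 326) * 1000 + 0) * m ^+ 7) / ((435 * 1000 + 456) * 1000 + 0)).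
Definition rw02 (x : R) : R := ((((450 * 1000 + 414) * 1000 + 720) - ((513 * 1000 + 986) * 1000 + 784) * x - ((112 * 1000 + 231) * 1000 + 392) * x ^+ 2 + ((13 * 1000 + 33) * 1000 + 650) * x ^+ 3 - ((26 * 1000 + 758) * 1000 + 235) * x ^+ 4 + ((14 * 1000 + 79) * 1000 + 289) * x ^+ 5 + ((7 * 1000 + 956) * 1000 + 347) * x ^+ 6 + (465 * 1000 + 125) * x ^+ 7) / ((435 * 1000 + 456) * 1000 + 0)).
Lemma cf_w02 k : (6 <= k)%N -> wconv V0 V2 k = rw02 k%:R.
Proof.
move=> Hk.
have Kk : (6 <= k)%N by lia.
rewrite (@wconv_split V0 V2 q2 E2 6 k isT V2_dec E2_zero Kk).
have HS : \sum_(1 <= j < k) (fun j => (k%:R - 2 * j%:R) ^+ 2 * (V0 j * q2 (k%:R - j%:R))) j = Gw02 k%:R k%:R.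
  have KAk : (1 <= k)%N by lia.
  apply: (@sum_anti (fun j => (k%:R - 2 * j%:R) ^+ 2 * (V0 j * q2 (k%:R - j%:R))) (fun m => Gw02 m%:R k%:R) 1 isT _ _ k KAk).
  - move=> m Hm; rewrite /= (V0_big Hm) ; unfold V0, V1, V2; unfold E0, E1, E2, Gw02, V0, V1, V2, q0, q1, q2, rw02; rewrite /=; by field.
  - rewrite unlock /= ; unfold V0, V1, V2; unfold E0, E1, E2, Gw02, V0, V1, V2, q0, q1, q2, rw02; rewrite /=; by field.
rewrite HS; clear HS Kk; move: Hk; case: k => [|[|[|[|[|[|k]]]]]] //= _.
rewrite unlock /= ?subSS ?subn0 ; unfold V0, V1, V2; unfold E0, E1, E2, Gw02, V0, V1, V2, q0, q1, q2, rw02; rewrite /=; by field.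
Qed.
Definition Gw11 (m x : R) : R := ((- ((1 * 1000 + 844) * 1000 + 640) + ((4 * 1000 + 611) * 1000 + 600) * x - ((2 * 1000 + 331) * 1000 + 420) * x ^+ 2 - ((2 * 1000 + 664) * 1000 + 480) * x ^+ 3 - (333 * 1000 + 60) * x ^+ 4 + (803 * 1000 + 736) * m + ((2 * 1000 + 813) * 1000 + 76) * m * x + ((2 * 1000 + 787) * 1000 + 29) * m * x ^+ 2 + ((1 * 1000 + 41) * 1000 + 880) * m * x ^+ 3 + (130 * 1000 + 235) * m * x ^+ 4 - ((1 * 1000 + 562) * 1000 + 820) * m ^+ 2 - (781 * 1000 + 410) * m ^+ 2 * x + ((2 * 1000 + 344) * 1000 + 230) * m ^+ 2 * x ^+ 2 + ((1 * 1000 + 953) * 1000 + 525) * m ^+ 2 * x ^+ 3 + (390 * 1000 + 705) * m ^+ 2 * x ^+ 4 - ((1 * 1000 + 562) * 1000 + 820) * m ^+ 3 - ((6 * 1000 + 251) * 1000 + 280) * m ^+ 3 * x - ((4 * 1000 + 427) * 1000 + 990) * m ^+ 3 * x ^+ 2 - (260 * 1000 + 470) * m ^+ 3 * x ^+ 3 + (260 * 1000 + 470) * m ^+ 3 * x ^+ 4 + ((3 * 1000 + 125) * 1000 + 640) * m ^+ 4 + ((2 * 1000 + 344) * 1000 + 230) * m ^+ 4 * x - ((1 * 1000 + 953) * 1000 + 525) * m ^+ 4 * x ^+ 2 - ((1 * 1000 + 172) * 1000 + 115) * m ^+ 4 * x ^+ 3 + (312 * 1000 + 564) * m ^+ 5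 + ((3 * 1000 + 438) * 1000 + 204) * m ^+ 5 * x + ((2 * 1000 + 31) * 1000 + 666) * m ^+ 5 * x ^+ 2 - ((1 * 1000 + 562) * 1000 + 820) * m ^+ 6 - ((1 * 1000 + 562) * 1000 + 820) * m ^+ 6 * x + (446 * 1000 + 520) * m ^+ 7) / ((4 * 1000 + 354) * 1000 + 560)).
Definition rw11 (x : R) : R := ((- ((3 * 1000 + 689) * 1000 + 280) + ((10 * 1000 + 26) * 1000 + 936) * x - ((2 * 1000 + 631) * 1000 + 174) * x ^+ 2 - ((3 * 1000 + 323) * 1000 + 341) * x ^+ 3 + (375 * 1000 + 760) * x ^+ 4 + (312 * 1000 + 564) * x ^+ 5 + (52 * 1000 + 94) * x ^+ 6 + (3 * 1000 + 721) * x ^+ 7) / ((4 * 1000 + 354) * 1000 + 560)).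
Lemma cf_w11 k : (5 <= k)%N -> wconv V1 V1 k = rw11 k%:R.
Proof.
move=> Hk.
have Kk : (3 <= k)%N by lia.
rewrite (@wconv_split V1 V1 q1 E1 3 k isT V1_dec E1_zero Kk).
have HS : \sum_(1 <= j < k) (fun j => (k%:R - 2 * j%:R) ^+ 2 * (V1 j * q1 (k%:R - j%:R))) j = Gw11 k%:R k%:R.
  have KAk : (3 <= k)%N by lia.
  apply: (@sum_anti (fun j => (k%:R - 2 * j%:R) ^+ 2 * (V1 j * q1 (k%:R - j%:R))) (fun m => Gw11 m%:R k%:R) 3 isT _ _ k KAk).
  - move=> m Hm; rewrite /= (V1_big Hm) ; unfold V0, V1, V2; unfold E0, E1, E2, Gw11, V0, V1, V2, q0, q1, q2, rw11; rewrite /=; by field.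
  - rewrite unlock /= ; unfold V0, V1, V2; unfold E0, E1, E2, Gw11, V0, V1, V2, q0, q1, q2, rw11; rewrite /=; by field.
rewrite HS; clear HS Kk; move: Hk; case: k => [|[|[|[|[|k]]]]] //= _.
rewrite unlock /= ?subSS ?subn0 ; unfold V0, V1, V2; unfold E0, E1, E2, Gw11, V0, V1, V2, q0, q1, q2, rw11; rewrite /=; by field.
Qed.
Lemma F0 n : (2 <= n)%N -> n%:R ^+ 2 * V0 n = 6 * V0 n.-1 + 6 * (conv V0 V0 n.-1) + 2 * (conv V0 (conv V0 V0) n.-1) - 1/2 * (wconv V0 V0 n).
Proof.
move=> Hn.
have [HT|HT] := leqP 2 n.
  case: n Hn HT => [|k] // _ HT; rewrite succnK.
rewrite (@cf_t000 k); last by lia.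
rewrite (@cf_00 k); last by lia.
rewrite (@cf_w00 k.+1); last by lia.
  unfold V0, V1, V2; unfold q0, q1, q2, E0, E1, E2, r00, r01, r02, r11, rt000, rt001, rt100, rt002, rt011, rt101, rt200, rw00, rw01, rw02, rw11; rewrite /=; by field.
move: Hn HT; case: n => [|[|n]] //= _ _.
all: rewrite /conv /wconv unlock /= ?subSS ?subn0; unfold V0, V1, V2; unfold q0, q1, q2, E0, E1, E2, r00, r01, r02, r11, rt000, rt001, rt100, rt002, rt011, rt101, rt200, rw00, rw01, rw02, rw11; rewrite /=; by field.
Qed.
Lemma F1 n : (2 <= n)%N -> n%:R ^+ 2 * V1 n + V0 n = 6 * V1 n.-1 + 6 * (conv V0 V1 n.-1 + conv V1 V0 n.-1) + 2 * (conv V0 (conv V0 V1) n.-1 + conv V0 (conv V1 V0) n.-1 + conv V1 (conv V0 V0) n.-1) - 1/2 * (wconv V0 V1 n + wconv V1 V0 n).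
Proof.
move=> Hn.
rewrite (conv_comm V1 V0) (wconv_comm V1 V0) (@conv_ext V0 V0 (conv V1 V0) (conv V0 V1) _ (fun j => erefl) (fun j => conv_comm V1 V0 j)).
have [HT|HT] := leqP 4 n.
  case: n Hn HT => [|k] // _ HT; rewrite succnK.
rewrite (@cf_t001 k); last by lia.
rewrite (@cf_t100 k); last by lia.
rewrite (@cf_01 k); last by lia.
rewrite (@cf_w01 k.+1); last by lia.
rewrite (@V1_big k.+1); last by lia.
rewrite (@V1_big k); last by lia.
  unfold V0, V1, V2; unfold q0, q1, q2, E0, E1, E2, r00, r01, r02, r11, rt000, rt001, rt100, rt002, rt011, rt101, rt200, rw00, rw01, rw02, rw11; rewrite /=; by field.
move: Hn HT; case: n => [|[|[|[|n]]]] //= _ _.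
all: rewrite /conv /wconv unlock /= ?subSS ?subn0; unfold V0, V1, V2; unfold q0, q1, q2, E0, E1, E2, r00, r01, r02, r11, rt000, rt001, rt100, rt002, rt011, rt101, rt200, rw00, rw01, rw02, rw11; rewrite /=; by field.
Qed.
Lemma F2 n : (2 <= n)%N -> n%:R ^+ 2 * V2 n + V1 n = 6 * V2 n.-1 + 6 * (conv V0 V2 n.-1 + conv V1 V1 n.-1 + conv V2 V0 n.-1) + 2 * (conv V0 (conv V0 V2) n.-1 + conv V0 (conv V1 V1) n.-1 + conv V1 (conv V0 V1) n.-1 + conv V0 (conv V2 V0) n.-1 + conv V1 (conv V1 V0) n.-1 + conv V2 (conv V0 V0) n.-1) - 1/2 * (wconv V0 V2 n + wconv V1 V1 n + wconv V2 V0 n).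
Proof.
move=> Hn.
rewrite (conv_comm V2 V0) (wconv_comm V2 V0) (@conv_ext V0 V0 (conv V2 V0) (conv V0 V2) _ (fun j => erefl) (fun j => conv_comm V2 V0 j)) (@conv_ext V1 V1 (conv V1 V0) (conv V0 V1) _ (fun j => erefl) (fun j => conv_comm V1 V0 j)).
have [HT|HT] := leqP 7 n.
  case: n Hn HT => [|k] // _ HT; rewrite succnK.
rewrite (@cf_t002 k); last by lia.
rewrite (@cf_t011 k); last by lia.
rewrite (@cf_t101 k); last by lia.
rewrite (@cf_t200 k); last by lia.
rewrite (@cf_02 k); last by lia.
rewrite (@cf_11 k); last by lia.
rewrite (@cf_w02 k.+1); last by lia.
rewrite (@cf_w11 k.+1); last by lia.
rewrite (@V2_big k.+1); last by lia.
rewrite (@V2_big k); last by lia.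
rewrite (@V1_big k.+1); last by lia.
  unfold V0, V1, V2; unfold q0, q1, q2, E0, E1, E2, r00, r01, r02, r11, rt000, rt001, rt100, rt002, rt011, rt101, rt200, rw00, rw01, rw02, rw11; rewrite /=; by field.
move: Hn HT; case: n => [|[|[|[|[|[|[|n]]]]]]] //= _ _.
all: rewrite /conv /wconv unlock /= ?subSS ?subn0; unfold V0, V1, V2; unfold q0, q1, q2, E0, E1, E2, r00, r01, r02, r11, rt000, rt001, rt100, rt002, rt011, rt101, rt200, rw00, rw01, rw02, rw11; rewrite /=; by field.
Qed.
Definition P0 (j : nat) : R := V0 j / 2 ^+ j.
Definition P1 (j : nat) : R := V1 j / 2 ^+ j.
Definition P2 (j : nat) : R := V2 j / 2 ^+ j.

Lemma sym_half (F : nat -> R) n : (forall j, (j <= n)%N -> F (n - j)%N = F j) ->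
  \sum_(1 <= j < n | (2 * j < n)%N) ((n - 2 * j) ^ 2)%:R * F j
  = 1/2 * \sum_(1 <= j < n) (n%:R - 2 * j%:R) ^+ 2 * F j.
Proof.
move=> HF.
pose G j := (n%:R - 2 * j%:R) ^+ 2 * F j.
have hE1 : \sum_(1 <= j < n | (2 * j < n)%N) ((n - 2 * j) ^ 2)%:R * F j
        = \sum_(1 <= j < n | (2 * j < n)%N) G j.
  apply: eq_bigr => j Hj; rewrite /G natrX natrB ?(ltnW Hj) // natrM; ring.
have hE2 : \sum_(1 <= j < n) G j = \sum_(1 <= j < n | (2 * j < n)%N) G j
                                  + \sum_(1 <= j < n | (2 * j < n)%N) G j.
  rewrite (bigID (fun j => (2 * j < n)%N)) /=; congr (_ + _).
  rewrite big_mkcond [RHS]big_mkcond sum_rev; apply: eq_big_nat => i /andP[i1 iN].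
  have GS : G (n - i)%N = G i.
    rewrite /G HF ?(ltnW iN) // natrB ?(ltnW iN) //; congr (_ * _); ring.
  case: (ltnP (2 * (n - i)) n) => h2 /=.
    by have -> : (2 * i < n)%N = false by apply/negbTE; rewrite -leqNgt; lia.
  rewrite GS; case: ifP => // /negbT; rewrite -leqNgt => h3.
  have E : (2 * i)%N = n by lia.
  by rewrite /G -E natrM subrr expr0n mul0r.
rewrite hE1; apply/eqP; rewrite hE2; apply/eqP.
set S := \sum_(1 <= j < n | (2 * j < n)%N) G j; by field.
Qed.

Lemma conv_pow A B k : conv (fun j => A j / 2 ^+ j) (fun j => B j / 2 ^+ j) k = conv A B k / 2 ^+ k.
Proof.
rewrite /conv mulr_suml; apply: eq_big_nat => j /andP[_ jk].
have -> : (2:R) ^+ k = 2 ^+ j * 2 ^+ (k - j) by rewrite -exprD subnKC // ltnW.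
have h1 : (2:R) ^+ j != 0 by rewrite expf_neq0 // pnatr_eq0.
have h2 : (2:R) ^+ (k - j) != 0 by rewrite expf_neq0 // pnatr_eq0.
move: h1 h2; move: ((2:R) ^+ j) ((2:R) ^+ (k - j)) => u v hu hv.
by field; rewrite hu hv.
Qed.

Lemma wconv_pow A B k : wconv (fun j => A j / 2 ^+ j) (fun j => B j / 2 ^+ j) k = wconv A B k / 2 ^+ k.
Proof.
rewrite /wconv mulr_suml; apply: eq_big_nat => j /andP[_ jk].
have -> : (2:R) ^+ k = 2 ^+ j * 2 ^+ (k - j) by rewrite -exprD subnKC // ltnW.
have h1 : (2:R) ^+ j != 0 by rewrite expf_neq0 // pnatr_eq0.
have h2 : (2:R) ^+ (k - j) != 0 by rewrite expf_neq0 // pnatr_eq0.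
move: h1 h2; move: ((2:R) ^+ j) ((2:R) ^+ (k - j)) => u v hu hv.
by field; rewrite hu hv.
Qed.

Lemma conv_pow3 A B C k :
  conv (fun j => A j / 2 ^+ j) (conv (fun j => B j / 2 ^+ j) (fun j => C j / 2 ^+ j)) k
  = conv A (conv B C) k / 2 ^+ k.
Proof.
rewrite (@conv_ext _ _ _ (fun j => conv B C j / 2 ^+ j) k (fun j => erefl) (fun j => conv_pow B C j)).
exact: conv_pow.
Qed.

Lemma lin_trick (x y u v c : R) : c != 0 -> x - y = (u - v) / c -> u = v -> x = y.
Proof. by move=> c0 E H; apply/eqP; rewrite -subr_eq0 E H subrr mul0r. Qed.

Definition N0 (n : nat) : R :=
  3 * P0 n.-1 + 3 * (\sum_(1 <= j1 < n.-1) P0 j1 * P0 (n.-1 - j1)%N)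
  + (\sum_(1 <= j1 < n.-1) \sum_(1 <= j2 < n.-1 - j1)
       P0 j1 * P0 j2 * P0 (n.-1 - j1 - j2)%N)
  - (\sum_(1 <= j1 < n | (2 * j1 < n)%N)
       ((n - 2 * j1) ^ 2)%:R * P0 j1 * P0 (n - j1)%N).

Definition N1 (n : nat) : R :=
  3 * P1 n.-1 + 3 * (\sum_(1 <= j1 < n.-1) (P0 j1 * P1 (n.-1 - j1)%N + P1 j1 * P0 (n.-1 - j1)%N))
  + (\sum_(1 <= j1 < n.-1) \sum_(1 <= j2 < n.-1 - j1)
       (P0 j1 * P0 j2 * P1 (n.-1 - j1 - j2)%N
        + (P0 j1 * P1 j2 + P1 j1 * P0 j2) * P0 (n.-1 - j1 - j2)%N))
  - (\sum_(1 <= j1 < n | (2 * j1 < n)%N)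
       (((n - 2 * j1) ^ 2)%:R * P0 j1 * P1 (n - j1)%N
        + ((n - 2 * j1) ^ 2)%:R * P1 j1 * P0 (n - j1)%N)).

Definition N2 (n : nat) : R :=
  3 * P2 n.-1 + 3 * (\sum_(1 <= j1 < n.-1)
       (P0 j1 * P2 (n.-1 - j1)%N + P1 j1 * P1 (n.-1 - j1)%N + P2 j1 * P0 (n.-1 - j1)%N))
  + (\sum_(1 <= j1 < n.-1) \sum_(1 <= j2 < n.-1 - j1)
       (P0 j1 * P0 j2 * P2 (n.-1 - j1 - j2)%N
        + (P0 j1 * P1 j2 + P1 j1 * P0 j2) * P1 (n.-1 - j1 - j2)%N
        + (P0 j1 * P2 j2 + P1 j1 * P1 j2 + P2 j1 * P0 j2) * P0 (n.-1 - j1 - j2)%N))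
  - (\sum_(1 <= j1 < n | (2 * j1 < n)%N)
       (((n - 2 * j1) ^ 2)%:R * P0 j1 * P2 (n - j1)%N
        + ((n - 2 * j1) ^ 2)%:R * P1 j1 * P1 (n - j1)%N
        + ((n - 2 * j1) ^ 2)%:R * P2 j1 * P0 (n - j1)%N)).

Lemma N0_conv n : N0 n = 3 * P0 n.-1 + 3 * (conv P0 P0 n.-1)
  + (conv P0 (conv P0 P0) n.-1) - 1/2 * (wconv P0 P0 n).
Proof.
rewrite /N0; congr (_ + _ + _ - _).
  rewrite /conv; apply: eq_bigr => j1 _; rewrite mulr_sumr; apply: eq_bigr => j2 _; ring.
rewrite (eq_bigr (fun j => ((n - 2 * j) ^ 2)%:R * (P0 j * P0 (n - j)%N))); last by move=> j _; ring.
rewrite sym_half; last by move=> j jn; rewrite subKn // mulrC.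
congr (_ * _); rewrite /wconv; apply: eq_bigr => j _; ring.
Qed.

Lemma N1_conv n : N1 n = 3 * P1 n.-1 + 3 * (conv P0 P1 n.-1 + conv P1 P0 n.-1)
  + (conv P0 (conv P0 P1) n.-1 + conv P0 (conv P1 P0) n.-1 + conv P1 (conv P0 P0) n.-1)
  - 1/2 * (wconv P0 P1 n + wconv P1 P0 n).
Proof.
rewrite /N1; congr (_ + _ + _ - _).
- by congr (_ * _); rewrite /conv -!big_split.
- rewrite /conv -!big_split /=; apply: eq_bigr => j1 _.
  rewrite !mulr_sumr -!big_split /=; apply: eq_bigr => j2 _; ring.
rewrite (eq_bigr (fun j => ((n - 2 * j) ^ 2)%:R * (P0 j * P1 (n - j)%N + P1 j * P0 (n - j)%N))); last by move=> j _; ring.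
rewrite sym_half; last by move=> j jn; rewrite subKn //; ring.
congr (_ * _); rewrite /wconv -big_split; apply: eq_bigr => j _ /=; ring.
Qed.

Lemma N2_conv n : N2 n = 3 * P2 n.-1 + 3 * (conv P0 P2 n.-1 + conv P1 P1 n.-1 + conv P2 P0 n.-1)
  + (conv P0 (conv P0 P2) n.-1 + conv P0 (conv P1 P1) n.-1 + conv P1 (conv P0 P1) n.-1
     + conv P0 (conv P2 P0) n.-1 + conv P1 (conv P1 P0) n.-1 + conv P2 (conv P0 P0) n.-1)
  - 1/2 * (wconv P0 P2 n + wconv P1 P1 n + wconv P2 P0 n).
Proof.
rewrite /N2; congr (_ + _ + _ - _).
- by congr (_ * _); rewrite /conv -!big_split.
- rewrite /conv -!big_split /=; apply: eq_bigr => j1 _.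
  rewrite !mulr_sumr -!big_split /=; apply: eq_bigr => j2 _; ring.
rewrite (eq_bigr (fun j => ((n - 2 * j) ^ 2)%:R * (P0 j * P2 (n - j)%N + P1 j * P1 (n - j)%N + P2 j * P0 (n - j)%N))); last by move=> j _; ring.
rewrite sym_half; last by move=> j jn; rewrite subKn //; ring.
congr (_ * _); rewrite /wconv -!big_split; apply: eq_bigr => j _ /=; ring.
Qed.

Lemma two_neq0 k : (2:R) ^+ k != 0.
Proof. by rewrite expf_neq0 // pnatr_eq0. Qed.

Lemma key0 n : (2 <= n)%N -> (n ^ 2)%:R * P0 n = N0 n.
Proof.
move=> Hn; have F := F0 Hn.
rewrite N0_conv conv_pow3 conv_pow wconv_pow /P0 natrX.
move: Hn F; case: n => [|k] // Hn; rewrite succnK (exprS (2:R) k) => F.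
have h := two_neq0 k.
apply: (lin_trick (c := 2 * 2 ^+ k) _ _ F); first by rewrite mulf_neq0 // pnatr_eq0.
move: h; move: ((2:R) ^+ k) => t ht.
by field; rewrite ht.
Qed.

Lemma key1 n : (2 <= n)%N -> (n ^ 2)%:R * P1 n + P0 n = N1 n.
Proof.
move=> Hn; have F := F1 Hn.
rewrite N1_conv !conv_pow3 !conv_pow !wconv_pow /P0 /P1 natrX.
move: Hn F; case: n => [|k] // Hn; rewrite succnK (exprS (2:R) k) => F.
have h := two_neq0 k.
apply: (lin_trick (c := 2 * 2 ^+ k) _ _ F); first by rewrite mulf_neq0 // pnatr_eq0.
move: h; move: ((2:R) ^+ k) => t ht.
by field; rewrite ht.
Qed.

Lemma key2 n : (2 <= n)%N -> (n ^ 2)%:R * P2 n + P1 n = N2 n.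
Proof.
move=> Hn; have F := F2 Hn.
rewrite N2_conv !conv_pow3 !conv_pow !wconv_pow /P0 /P1 /P2 natrX.
move: Hn F; case: n => [|k] // Hn; rewrite succnK (exprS (2:R) k) => F.
have h := two_neq0 k.
apply: (lin_trick (c := 2 * 2 ^+ k) _ _ F); first by rewrite mulf_neq0 // pnatr_eq0.
move: h; move: ((2:R) ^+ k) => t ht.
by field; rewrite ht.
Qed.
Lemma size_useq (a : R) n : size (useq a n) = n.+1.
Proof. by elim: n => //= n IH; rewrite size_rcons IH. Qed.

Lemma nth_useq (a : R) n j : (j <= n)%N -> nth 0 (useq a n) j = uu a j.
Proof.
rewrite /uu; elim: n => [|n IH] Hj; first by move: Hj; rewrite leqn0 => /eqP ->.
move: Hj; rewrite leq_eqVlt => /orP[/eqP -> // | Hj].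
by rewrite /= nth_rcons size_useq Hj IH.
Qed.

Lemma uu_rec (a : R) n : uu a n.+1 = ustep a (useq a n) n.+1.
Proof. by rewrite /uu /= nth_rcons size_useq ltnn eqxx. Qed.

Lemma ustep_eq (a : R) (s : seq R) k : ustep a s k.+2 =
   (3 * nth 0 s k.+2.-1
    + 3 * (\sum_(1 <= j1 < k.+2.-1) nth 0 s j1 * nth 0 s (k.+2.-1 - j1)%N)
    + (\sum_(1 <= j1 < k.+2.-1) \sum_(1 <= j2 < k.+2.-1 - j1)
          nth 0 s j1 * nth 0 s j2 * nth 0 s (k.+2.-1 - j1 - j2)%N)
    - (\sum_(1 <= j1 < k.+2 | (2 * j1 < k.+2)%N)
          ((k.+2 - 2 * j1) ^ 2)%:R * nth 0 s j1 * nth 0 s (k.+2 - j1)%N))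
   / (a ^+ 2 + (k.+2 ^ 2)%:R).
Proof. by []. Qed.

Lemma uu_expan n : (1 <= n)%N -> expan (fun a : R => uu a n) (P0 n) (P1 n) (P2 n).
Proof.
elim/ltn_ind: n => n IH Hn.
case: n IH Hn => [|[|k]] IH Hn //.
  apply: (expan_ext (f := fun a : R => (fun _ => 1) a / (a ^+ 2 + 1))).
    by move=> a; rewrite uu_rec.
  apply: (expan_div (expan_cst 1)) => //; rewrite /P0 /P1 /P2; unfold V0, V1, V2; unfold q0, q1, q2, E0, E1, E2; rewrite /=; by field.
have IHx : forall j, (1 <= j)%N -> (j <= k.+1)%N ->
    expan (fun a : R => nth 0 (useq a k.+1) j) (P0 j) (P1 j) (P2 j).
  move=> j j1 jk; apply: (expan_ext (f := fun a => uu a j)); first by move=> a; rewrite nth_useq.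
  by apply: IH.
apply: (expan_ext (f := fun a : R => ustep a (useq a k.+1) k.+2)); first by move=> a; rewrite uu_rec.
apply: (expan_ext (f := fun a : R => _ / (a ^+ 2 + (k.+2 ^ 2)%:R))); first by move=> a; rewrite ustep_eq.
apply: (@expan_div _ (N0 k.+2) (N1 k.+2) (N2 k.+2)); last first.
- exact: key2.
- exact: key1.
- exact: key0.
- by rewrite ltr0n expn_gt0.
apply: expan_sub.
  apply: expan_add.
    apply: expan_add.
      by apply: expan_scale; apply: IHx.
    apply: expan_scale; apply: expan_sum => j1; rewrite mem_index_iota => /andP[h1 h2] _.
    by apply: expan_mul; apply: IHx; lia.
  apply: expan_sum => j1; rewrite mem_index_iota => /andP[h1 h2] _.
  apply: expan_sum => j2; rewrite mem_index_iota => /andP[h3 h4] _.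
  by apply: expan_mul; first apply: expan_mul; apply: IHx; lia.
apply: expan_sum => j1; rewrite mem_index_iota => /andP[h1 h2] _.
by apply: expan_mul; first apply: expan_scale; apply: IHx; lia.
Qed.

Lemma expan_a4 (f : R -> R) c0 c1 c2 : expan f c0 c1 c2 -> a4_coef f c2.
Proof. by move=> [C [d [d0 H]]]; exists c0, c1, C, d; split. Qed.

Lemma P2_val n : (6 <= n)%N -> P2 n = (61 ^+ 2 / 12 ^+ 4) * ((n.+1)%:R ^+ 2 / 2 ^+ n.+1)
         * (n%:R + (2 ^+ 2 * 29 ^+ 2 * 89) / (5 ^+ 2 * 61 ^+ 2)).
Proof.
move=> Hn; rewrite /P2 V2_big // (exprS (2:R) n); unfold q2.
have h := two_neq0 n.
move: h; move: ((2:R) ^+ n) => t ht.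
by field; rewrite ht.
Qed.
End S.
Unset Implicit Arguments.
Lemma a4_eq (R : realType) (f : R -> R) c c' : c' = c -> a4_coef f c' -> a4_coef f c.
Proof. by move->. Qed.

Theorem proposition12 (R : realType) :
  [/\ a4_coef (fun a : R => uu a 1) 1,
      a4_coef (fun a : R => uu a 2) (63 / 64),
      a4_coef (fun a : R => uu a 3) (2917 / 2592),
      a4_coef (fun a : R => uu a 4) ((5 * 229 * 293) / (2 ^+ 12 * 3 ^+ 4)) &
      a4_coef (fun a : R => uu a 5) ((251 * 1523) / (2 ^+ 11 * 3 ^+ 2 * 5 ^+ 2))]
  /\ forall n : nat, (6 <= n)%N ->
      a4_coef (fun a : R => uu a n)
        ((61 ^+ 2 / 12 ^+ 4) * ((n.+1)%:R ^+ 2 / 2 ^+ n.+1)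
         * (n%:R + (2 ^+ 2 * 29 ^+ 2 * 89) / (5 ^+ 2 * 61 ^+ 2))).
Proof.
have H n : (1 <= n)%N -> a4_coef (fun a : R => uu a n) (P2 R n).
  by move=> Hn; apply: expan_a4; apply: uu_expan.
split.
  split; (apply: a4_eq; last by apply: H); rewrite /P2; unfold V2, q2, E2; rewrite /=; by field.
move=> n Hn; apply: a4_eq; last by apply: H; lia.
exact: P2_val.
Qed.
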